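(* Let $M$ be a nontrivial monoid with identity $e$, $X$ a set and $\tau,\tau'$ topologies on $X$ with $\tau'$ strictly finer than $\tau$. In $\mathscr{C}=\mathbf{Top}$, let $\alpha$ be the partial action datum of $M$ on $(X,\tau)$ given by $\alpha(e)=[(X,\tau),\mathrm{id}_X,\mathrm{id}_X]$ and $\alpha(m)=[(X,\tau'),\mathrm{id}_X,\mathrm{id}_X]$ for $m\neq e$ (where $\mathrm{id}_X\colon(X,\tau')\to(X,\tau)$ is the continuous identity map). Then $\alpha$ is a strong partial action of $M$ on $(X,\tau)$, but $\alpha$ is not the restriction of any global action of $M$ on any space $(Y,\upsilon)$ via any monomorphism $\iota\colon(X,\tau)\to(Y,\upsilon)$ in $\mathbf{Top}$.
   Context: A partial action datum of $M$ on an object $X$ of a category with pullbacks $\mathscr{C}$ assigns to each $m\in M$ an isomorphism class of spans $[\operatorname{dom}\alpha_m,\iota_m,\alpha_m]$ with $\iota_m\colon\operatorname{dom}\alpha_m\to X$ a monomorphism and $\alpha_m\colon\operatorname{dom}\alpha_m\to X$ (isomorphism of spans: an isomorphism of apexes commuting with both legs). For $m,n\in M$, let $\alpha_m^{-1}(\operatorname{dom}\alpha_n)$ be a pullback of $\alpha_m$ and $\iota_n$ with projections $\hat\iota^m_n$ to $\operatorname{dom}\alpha_m$ and $\hat\alpha^n_m$ to $\operatorname{dom}\alpha_n$, and $\operatorname{dom}\alpha_m\cap\operatorname{dom}\alpha_k$ a pullback of $\iota_m$ and $\iota_k$ with projections $\pi^{m,k}_1$ to $\operatorname{dom}\alpha_m$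 and $\pi^{m,k}_2$ to $\operatorname{dom}\alpha_k$. A strong partial action is a datum with $\alpha(e)=[X,\mathrm{id}_X,\mathrm{id}_X]$ such that for all $m,n$ there is an isomorphism $\theta\colon\alpha_m^{-1}(\operatorname{dom}\alpha_n)\to\operatorname{dom}\alpha_m\cap\operatorname{dom}\alpha_{nm}$ with $\iota_{nm}\circ\pi^{m,nm}_2\circ\theta=\iota_m\circ\hat\iota^m_n$ and $\alpha_{nm}\circ\pi^{m,nm}_2\circ\theta=\alpha_n\circ\hat\alpha^n_m$. A global action of $M$ on $Y$ is a family of morphisms $\beta_m\colon Y\to Y$ with $\beta_e=\mathrm{id}_Y$, $\beta_n\circ\beta_m=\beta_{nm}$. Given a global action $\beta$ on $Y$ and a monomorphism $\iota\colon X\to Y$, the restriction of $\beta$ via $\iota$ is the datum $\alpha$ on $X$ such that for each $m$ the square $\beta_m\circ\iota\circ\iota_m=\iota\circ\alpha_m$ is a pullback. *)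

(* Defs.v *)
From Stdlib Require Import Classical ClassicalDescription.

Set Implicit Arguments.

Record topology (X : Type) := Topology {
  opn : (X -> Prop) -> Prop;
  opn_full : opn (fun _ => True);
  opn_inter : forall U V, opn U -> opn V -> opn (fun x => U x /\ V x);
  opn_union : forall (I : Type) (F : I -> X -> Prop),
      (forall i, opn (F i)) -> opn (fun x => exists i, F i x)
}.

Record Top := mkTop { carrier :> Type; topo : topology carrier }.

Definition cont {A B : Top} (f : A -> B) : Prop :=
  forall U, opn (topo B) U -> opn (topo A) (fun x => U (f x)).

Definition iso {A B : Top} (f : A -> B) : Prop :=
  cont f /\ exists g : B -> A, cont g /\
    (forall x, g (f x) = x) /\ (forall y, f (g y) = y).

Definition mono {A B : Top} (f : A -> B) : Prop :=
  cont f /\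
  forall (Z : Top) (g h : Z -> A), cont g -> cont h ->
    (forall z, f (g z) = f (h z)) -> forall z, g z = h z.

Definition is_pullback {A B C P : Top} (f : A -> C) (g : B -> C)
    (p1 : P -> A) (p2 : P -> B) : Prop :=
  cont p1 /\ cont p2 /\ (forall z, f (p1 z) = g (p2 z)) /\
  forall (Z : Top) (q1 : Z -> A) (q2 : Z -> B), cont q1 -> cont q2 ->
    (forall z, f (q1 z) = g (q2 z)) ->
    exists u : Z -> P, cont u /\ (forall z, p1 (u z) = q1 z) /\
      (forall z, p2 (u z) = q2 z) /\
      forall v : Z -> P, cont v -> (forall z, p1 (v z) = q1 z) ->
        (forall z, p2 (v z) = q2 z) -> forall z, v z = u z.

(* A span X <- D -> X (a representative of its isomorphism class) *)
Record span (X : Top) := Span {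
  apex : Top;
  leg_i : apex -> X;
  leg_a : apex -> X
}.

Definition span_iso {X : Top} (s t : span X) : Prop :=
  exists h : apex s -> apex t, iso h /\
    (forall z, leg_i t (h z) = leg_i s z) /\
    (forall z, leg_a t (h z) = leg_a s z).

Definition id_span (X : Top) : span X := @Span X X (fun x => x) (fun x => x).

Definition partial_action_datum {M : Type} {X : Top} (al : M -> span X) : Prop :=
  forall m, mono (leg_i (al m)) /\ cont (leg_a (al m)).

Definition strong_partial_action {M : Type} (mul : M -> M -> M) (e : M)
    {X : Top} (al : M -> span X) : Prop :=
  partial_action_datum al /\
  span_iso (al e) (id_span X) /\
  forall m n : M,
  forall (P1 : Top) (hi : P1 -> apex (al m)) (ha : P1 -> apex (al n)),
    is_pullback (leg_a (al m)) (leg_i (al n)) hi ha ->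
  forall (P2 : Top) (pi1 : P2 -> apex (al m)) (pi2 : P2 -> apex (al (mul n m))),
    is_pullback (leg_i (al m)) (leg_i (al (mul n m))) pi1 pi2 ->
  exists theta : P1 -> P2, iso theta /\
    (forall z, leg_i (al (mul n m)) (pi2 (theta z)) = leg_i (al m) (hi z)) /\
    (forall z, leg_a (al (mul n m)) (pi2 (theta z)) = leg_a (al n) (ha z)).

Definition global_action {M : Type} (mul : M -> M -> M) (e : M) {Y : Top}
    (be : M -> Y -> Y) : Prop :=
  (forall m, cont (be m)) /\ (forall y, be e y = y) /\
  (forall m n y, be n (be m y) = be (mul n m) y).

Definition restriction_of {M : Type} {X Y : Top} (be : M -> Y -> Y)
    (iota : X -> Y) (al : M -> span X) : Prop :=
  forall m, is_pullback (fun x => be m (iota x)) iota (leg_i (al m)) (leg_a (al m)).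

Definition alpha_ex {M : Type} (e : M) (X : Type) (tau tau' : topology X)
    (m : M) : span (mkTop tau) :=
  if excluded_middle_informative (m = e)
  then @Span (mkTop tau) (mkTop tau) (fun x => x) (fun x => x)
  else @Span (mkTop tau) (mkTop tau') (fun x => x) (fun x => x).

(* Main.v *)
Require Import Defs.
From Stdlib Require Import Classical ClassicalDescription FunctionalExtensionality.

Lemma opn_eqf (T : Top) (A : Type) (a b : T -> A) (U : A -> Prop) :
  (forall z, a z = b z) -> opn (topo T) (fun x => U (a x)) -> opn (topo T) (fun x => U (b x)).
Proof.
  intros H. replace (fun x => U (b x)) with (fun x => U (a x)); auto.
  apply functional_extensionality; intro x; rewrite H; reflexivity.
Qed.

Lemma cont_comp (A B C : Top) (f : A -> B) (g : B -> C) :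
  cont f -> cont g -> cont (fun x => g (f x)).
Proof. intros cf cg U HU. apply (cf _ (cg U HU)). Qed.

Lemma cont_id (A : Top) : cont (fun x : A => x).
Proof. intros U HU; exact HU. Qed.

Lemma strong_gen (M : Type) (mul : M -> M -> M) (e : M)
  (mulm1 : forall a, mul a e = a)
  (X : Type) (tau tau' : topology X)
  (finer : forall U, opn tau U -> opn tau' U)
  (sg : M -> topology X) (sge : sg e = tau)
  (sgne : forall m, m <> e -> sg m = tau') :
  strong_partial_action mul e
    (fun m => @Span (mkTop tau) (mkTop (sg m)) (fun x => x) (fun x => x)).
Proof.
  assert (sgc : forall m U, opn tau U -> opn (sg m) U).
  { intros m U HU. destruct (classic (m = e)) as [->|Hm].
    - rewrite sge; exact HU.
    - rewrite (sgne m Hm); auto. }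
  assert (sgf : forall m U, opn (sg m) U -> opn tau' U).
  { intros m U HU. destruct (classic (m = e)) as [->|Hm].
    - rewrite sge in HU; auto.
    - rewrite (sgne m Hm) in HU; exact HU. }
  split; [|split].
  - intro m; simpl. split; [split|].
    + intros U HU; simpl in *; apply sgc; exact HU.
    + intros Z g h _ _ H z; apply H.
    + intros U HU; simpl in *; apply sgc; exact HU.
  - simpl. exists (fun x : mkTop (sg e) => (x : mkTop tau)). split; [split|].
    + intros U HU; simpl in *; rewrite sge; exact HU.
    + exists (fun x : mkTop tau => (x : mkTop (sg e))). split; [|split; reflexivity].
      intros U HU; simpl in *; rewrite sge in HU; exact HU.
    + split; reflexivity.
  - intros m n P1 hi ha H1 P2 pi1 pi2 H2.
    destruct H1 as [c1 [c2 [eq1 up1]]].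
    destruct H2 as [d1 [d2 [eq2 up2]]].
    simpl in eq1, eq2.
    assert (chi : cont (B := mkTop (sg (mul n m))) (fun z => (hi z : X))).
    { intros U HU; simpl in HU. destruct (classic (m = e)) as [->|Hm].
      - rewrite mulm1 in HU. apply opn_eqf with (a := fun z => ha z).
        + intro z; symmetry; apply eq1.
        + apply c2; exact HU.
      - apply c1; simpl. rewrite (sgne m Hm). eapply sgf; exact HU. }
    assert (cpi : cont (B := mkTop (sg n)) (fun z => (pi1 z : X))).
    { intros U HU; simpl in HU. destruct (classic (m = e)) as [->|Hm].
      - apply opn_eqf with (a := fun z => pi2 z).
        + intro z; symmetry; apply eq2.
        + apply d2; simpl. rewrite mulm1. exact HU.
      - apply d1; simpl. rewrite (sgne m Hm). eapply sgf; exact HU. }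
    destruct (up2 P1 hi (fun z => hi z) c1 chi (fun z => eq_refl)) as [theta [ct [t1 [t2 tu]]]].
    destruct (up1 P2 pi1 (fun z => pi1 z) d1 cpi (fun z => eq_refl)) as [g [cg [g1 [g2 gu]]]].
    exists theta. split; [split; [exact ct|]|split].
    + exists g. split; [exact cg|split].
      * intro x.
        destruct (up1 P1 hi ha c1 c2 eq1) as [u [cu [u1 [u2 uu]]]].
        rewrite (uu (fun z => g (theta z))); [| apply cont_comp; auto | |].
        -- symmetry; apply (uu (fun z => z)); [apply cont_id| |]; intro z; reflexivity.
        -- intro z; simpl; rewrite g1; apply t1.
        -- intro z; simpl; rewrite g2, t1; apply eq1.
      * intro y.
        destruct (up2 P2 pi1 pi2 d1 d2 eq2) as [u [cu [u1 [u2 uu]]]].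
        rewrite (uu (fun z => theta (g z))); [| apply cont_comp; auto | |].
        -- symmetry; apply (uu (fun z => z)); [apply cont_id| |]; intro z; reflexivity.
        -- intro z; simpl; rewrite t1; apply g1.
        -- intro z; simpl; rewrite t2, g1; apply eq2.
    + intro z; simpl; apply t2.
    + intro z; simpl; rewrite t2; apply eq1.
Qed.

Theorem mainTheorem18
  (M : Type) (mul : M -> M -> M) (e : M)
  (mulA : forall a b c, mul a (mul b c) = mul (mul a b) c)
  (mul1m : forall a, mul e a = a) (mulm1 : forall a, mul a e = a)
  (nontriv : exists m : M, m <> e)
  (X : Type) (tau tau' : topology X)
  (finer : forall U, opn tau U -> opn tau' U)
  (strict : exists U, opn tau' U /\ ~ opn tau U) :
  partial_action_datum (alpha_ex e tau tau') /\
  strong_partial_action mul e (alpha_ex e tau tau') /\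
  ~ (exists (Y : Top) (be : M -> Y -> Y) (iota : mkTop tau -> Y),
       global_action mul e be /\ mono iota /\
       restriction_of be iota (alpha_ex e tau tau')).
Proof.
  set (sg := fun m => if excluded_middle_informative (m = e) then tau else tau').
  assert (Heq : alpha_ex e tau tau' =
    (fun m => @Span (mkTop tau) (mkTop (sg m)) (fun x => x) (fun x => x))).
  { apply functional_extensionality; intro m. unfold alpha_ex, sg.
    destruct (excluded_middle_informative (m = e)); reflexivity. }
  assert (sge : sg e = tau).
  { unfold sg; destruct (excluded_middle_informative (e = e)); congruence. }
  assert (sgne : forall m, m <> e -> sg m = tau').
  { intros m Hm; unfold sg; destruct (excluded_middle_informative (m = e)); congruence. }
  rewrite Heq. clearbody sg.
  pose proof (@strong_gen M mul e mulm1 X tau tau' finer sg sge sgne) as HS.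
  split; [exact (proj1 HS)|split; [exact HS|]].
  intros [Y [be [iota [_ [_ Hr]]]]].
  destruct nontriv as [m Hm]. destruct strict as [U [HU HnU]].
  destruct (Hr m) as [_ [_ [Hc Hup]]]. simpl in Hc.
  destruct (Hup (mkTop tau) (fun x => x) (fun x => x) (cont_id _) (cont_id _) Hc)
    as [u [cu [u1 _]]].
  apply HnU. simpl in u1.
  apply opn_eqf with (T := mkTop tau) (a := fun z => u z) (b := fun z => z); [exact u1|].
  apply cu. simpl. rewrite (sgne m Hm). exact HU.
Qed.
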